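(* Fix $r\ge2$ and $\epsilon>0$. For all sufficiently large $k$ the following holds: if a coloring of $[1,M_\epsilon]$ produced by the random scheme in the context (i.e., any outcome of it) has no bad $t$-term arithmetic progression with common difference greater than $b$, then every monochromatic $\lfloor k/2\rfloor$-term ascending wave $w_1<\dots<w_{\lfloor k/2\rfloor}$ in $[1,M_\epsilon]$ satisfies $w_{\lfloor k/2\rfloor}-w_{\lfloor k/2\rfloor-1}\geq b\,k^{1-\epsilon/2}$.
   Context: Ascending wave: positive integers $w_1<\dots<w_n$ with $w_{i+1}-w_i\ge w_i-w_{i-1}$ for $2\le i\le n-1$; $AW(k;r)$ is the least $N$ such that every $r$-coloring of $\{1,\dots,N\}$ has a monochromatic $k$-term ascending wave. Non-integer quantities used as integers are rounded down; $\log=\log_2$. Fix $r\ge2$, $\epsilon>0$, and $k$. Let $K=\lfloor k/(10(4r-4))\rfloor$, $b=AW(K;r-1)-1$, and $M_\epsilon=\lfloor k^{2r-1-\epsilon}/(2^{r-1}(40r)^{r^2-1})\rfloor$. For each $i\in\{0,\dots,r-1\}$ fix a coloring $\gamma_i$ of $\{1,\dots,b\}$ with colors from $\{0,\dots,r-1\}\setminus\{i\}$ having no monochromatic $K$-term ascending wave. Let $A$ be the $r^2\times 2r$ matrix with rows indexed by pairs $(j,i)$, $j\in\{0,\dots,r-1\}$, $i\in\{1,\dots,r\}$, whose row $(j,i)$ has entry $(m+j)\bmod r$ in position $2m+1$ and entry $(i+m-1+j)\bmod r$ in position $2m+2$, for $m=0,\dots,r-1$. Partition $[1,M_\epsilon]$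 into consecutive blocks $B_1,B_2,\dots$ of $b$ integers each (the last possibly partial), and group the blocks into consecutive groups of $2r$ blocks. For each group independently, choose a row $(s_1,\dots,s_{2r})$ of $A$ uniformly at random, give the $l$-th block of the group the label $s_l$, and color it by $\gamma_{s_l}$ (translated to that block). An arithmetic progression $x_1<\dots<x_t$ is good if for every $c\in\{0,\dots,r-1\}$ there is a term $x_i$ lying in a block $B_j$ such that $B_j$ and $B_{j+1}$ both have label $c$; otherwise it is bad. Here $t=\frac{(4r-2)(2r+1)}{\log(r^2/(r^2-1))}\log k+\frac{(2r+1)(\log r+1)}{\log(r^2/(r^2-1))}$. *)

(* Defs.v *)
From Stdlib Require Export Reals Arith Lia.
Open Scope R_scope.

(* floor of a real, as a natural number (the real quantities used here are >= 0) *)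
Definition nfloor (x : R) : nat := Z.to_nat (Int_part x).

Definition log2 (x : R) : R := ln x / ln 2.

Definition is_wave (n : nat) (w : nat -> nat) : Prop :=
  (forall i, (i < n)%nat -> (1 <= w i)%nat) /\
  (forall i, (i + 1 < n)%nat -> (w i < w (i + 1))%nat) /\
  (forall i, (i + 2 < n)%nat -> (w (i + 1) - w i <= w (i + 2) - w (i + 1))%nat).

Definition has_mono_wave (c : nat -> nat) (N n : nat) : Prop :=
  exists w : nat -> nat, is_wave n w /\
    (forall i, (i < n)%nat -> (w i <= N)%nat) /\
    exists col, forall i, (i < n)%nat -> c (w i) = col.

Definition AW_prop (K s N : nat) : Prop :=
  forall c : nat -> nat, (forall x, (1 <= x <= N)%nat -> (c x < s)%nat) ->
    has_mono_wave c N K.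

Definition is_AW (K s N : nat) : Prop :=
  AW_prop K s N /\ forall M, AW_prop K s M -> (N <= M)%nat.

Definition K_of (r k : nat) : nat := (k / (10 * (4 * r - 4)))%nat.

Definition M_eps (r : nat) (eps : R) (k : nat) : nat :=
  nfloor (Rpower (INR k) (2 * INR r - 1 - eps) /
          (2 ^ (r - 1) * (40 * INR r) ^ (r * r - 1))).

Definition t_len (r k : nat) : nat :=
  let L := log2 (INR r ^ 2 / (INR r ^ 2 - 1)) in
  nfloor ((4 * INR r - 2) * (2 * INR r + 1) / L * log2 (INR k)
          + (2 * INR r + 1) * (log2 (INR r) + 1) / L).

(* Entry at 0-based position p (= 1-based position p+1) of row (j,i) of A:
   position 2m+1 holds (m+j) mod r, position 2m+2 holds (i+m-1+j) mod r. *)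
Definition A_entry (r j i p : nat) : nat :=
  if Nat.even p then ((p / 2 + j) mod r)%nat
  else ((i + p / 2 - 1 + j) mod r)%nat.

(* blocks are 0-indexed: block q (= B_{q+1}) is {q*b+1, ..., q*b+b} *)
Definition block (b x : nat) : nat := ((x - 1) / b)%nat.

(* label of block q: group q/(2r) chose row sel g = (j,i), and q is at
   0-based position q mod (2r) of its group *)
Definition label (r : nat) (sel : nat -> nat * nat) (q : nat) : nat :=
  A_entry r (fst (sel (q / (2 * r))%nat)) (snd (sel (q / (2 * r))%nat)) (q mod (2 * r)).

Definition colour (r b : nat) (gam : nat -> nat -> nat) (sel : nat -> nat * nat)
  (x : nat) : nat :=
  gam (label r sel (block b x)) (x - block b x * b)%nat.

Definition good_AP (r b M : nat) (sel : nat -> nat * nat) (t a d : nat) : Prop :=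
  forall c, (c < r)%nat -> exists s, (s < t)%nat /\
    let q := block b (a + s * d) in
    label r sel q = c /\ label r sel (q + 1) = c /\ ((q + 1) * b + 1 <= M)%nat.

(* Main.v *)
Require Import Defs.
From Stdlib Require Import Reals Arith Lia Lra Classical ZArith.
Open Scope nat_scope.

Lemma block_bounds b x : (1 <= b)%nat -> (1 <= x)%nat ->
  (block b x * b + 1 <= x <= block b x * b + b)%nat.
Proof.
  intros Hb Hx. unfold block.
  pose proof (Nat.div_mod (x-1) b ltac:(lia)).
  pose proof (Nat.mod_upper_bound (x-1) b ltac:(lia)).
  set (q := (x-1)/b) in *. set (m := (x-1) mod b) in *. nia.
Qed.

Lemma block_mono b x y : (x <= y)%nat -> (block b x <= block b y)%nat.
Proof. intros. unfold block. apply Nat.Div0.div_le_mono. lia. Qed.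

Lemma block_near b y x : (1 <= b)%nat -> (1 <= y)%nat -> (y <= x <= y + b)%nat ->
  block b x = block b y \/ block b x = S (block b y).
Proof.
  intros Hb Hy Hx.
  pose proof (block_bounds b y Hb Hy). pose proof (block_bounds b x Hb ltac:(lia)).
  pose proof (block_mono b y x ltac:(lia)).
  set (qy := block b y) in *. set (qx := block b x) in *.
  assert (qx <= S qy)%nat.
  { destruct (Nat.le_gt_cases qx (S qy)) as [h|h]; auto.
    assert (qx * b >= (S (S qy)) * b)%nat by (apply Nat.mul_le_mono_r; lia). nia. }
  lia.
Qed.

Lemma label_lt r sel q : (1 <= r)%nat -> (label r sel q < r)%nat.
Proof.
  intros. unfold label, A_entry. destruct Nat.even; apply Nat.mod_upper_bound; lia.
Qed.

Lemma label_hit r sel q0 c : (2 <= r)%nat -> (forall g, fst (sel g) < r)%nat ->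
  (c < r)%nat -> exists q, (q0 <= q <= q0 + 4*r - 2)%nat /\ label r sel q = c.
Proof.
  intros Hr Hs Hc.
  set (g := S (q0 / (2*r))).
  set (j := fst (sel g)).
  set (m := ((c + r - j) mod r)%nat).
  assert (Hj : (j < r)%nat) by apply Hs.
  assert (Hm : (m < r)%nat) by (apply Nat.mod_upper_bound; lia).
  pose proof (Nat.div_mod q0 (2*r) ltac:(lia)).
  pose proof (Nat.mod_upper_bound q0 (2*r) ltac:(lia)).
  exists (g * (2*r) + 2*m)%nat. split.
  - unfold g. set (d := q0 / (2*r)) in *. set (e := q0 mod (2*r)) in *. nia.
  - unfold label.
    assert (E1 : ((g * (2 * r) + 2 * m) / (2 * r) = g)%nat).
    { rewrite Nat.div_add_l by lia. rewrite Nat.div_small by lia. lia. }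
    assert (E2 : ((g * (2 * r) + 2 * m) mod (2 * r) = 2*m)%nat).
    { rewrite Nat.add_comm, Nat.Div0.mod_add. apply Nat.mod_small. lia. }
    rewrite E1, E2. fold j. unfold A_entry.
    replace (Nat.even (2*m)) with true by (rewrite Nat.even_mul; reflexivity).
    replace (2*m/2)%nat with m by (rewrite Nat.mul_comm, Nat.div_mul; lia).
    unfold m. rewrite Nat.Div0.add_mod_idemp_l.
    replace (c + r - j + j)%nat with (c + 1*r)%nat by lia.
    rewrite Nat.Div0.mod_add. apply Nat.mod_small; lia.
Qed.

Open Scope nat_scope.

Lemma w_mono n w : is_wave n w -> forall l l', l <= l' -> l' < n -> w l <= w l'.
Proof.
  intros [_ [H _]] l l' Hl. induction Hl; intros; [lia|].
  specialize (IHHl ltac:(lia)). specialize (H m ltac:(lia)).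
  replace (S m) with (m+1) by lia. lia.
Qed.

Lemma g_mono n w : is_wave n w -> forall l l', l <= l' -> l'+1 < n ->
  w (l+1) - w l <= w (l'+1) - w l'.
Proof.
  intros [_ [_ H]] l l' Hl. induction Hl; intros; [lia|].
  specialize (IHHl ltac:(lia)). specialize (H m ltac:(lia)).
  replace (S m) with (m+1) in * by lia. replace (m+1+1) with (m+2) by lia. lia.
Qed.

Definition gam_ok r b K (gam : nat -> nat -> nat) :=
  forall i, (i < r)%nat ->
       (forall x, (1 <= x <= b)%nat -> (gam i x < r)%nat /\ gam i x <> i) /\
       ~ has_mono_wave (gam i) b K.

Lemma colour_lt r b gam sel x : 1 <= r -> 1 <= b -> 1 <= x -> gam_ok r b 0 gam ->
  colour r b gam sel x < r.
Abort.

Lemma colour_lt r b K gam sel x : 1 <= r -> 1 <= b -> 1 <= x -> gam_ok r b K gam ->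
  colour r b gam sel x < r.
Proof.
  intros Hr Hb Hx Hg. unfold colour.
  pose proof (block_bounds b x Hb Hx).
  apply (Hg _ (label_lt r sel _ Hr)). lia.
Qed.

Lemma not_c_block r b K gam sel x c : 1 <= r -> 1 <= b -> 1 <= x -> gam_ok r b K gam ->
  colour r b gam sel x = c -> label r sel (block b x) <> c.
Proof.
  intros Hr Hb Hx Hg E L. unfold colour in E. rewrite L in E.
  pose proof (block_bounds b x Hb Hx).
  assert (c < r) by (rewrite <- L; apply label_lt; lia).
  destruct (Hg c H0) as [H1 _]. apply (H1 (x - block b x * b)); [lia|exact E].
Qed.

Lemma same_block r b K gam sel n w j : 1 <= r -> 1 <= b -> 1 <= K -> gam_ok r b K gam ->
  is_wave n w ->
  (forall i, i < n -> colour r b gam sel (w i) = colour r b gam sel (w 0)) ->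
  j + K - 1 < n -> block b (w j) < block b (w (j + K - 1)).
Proof.
  intros Hr Hb HK Hg Hw Hc Hj.
  destruct (Nat.lt_ge_cases (block b (w j)) (block b (w (j + K - 1)))) as [h|h]; auto.
  exfalso.
  set (q := block b (w j)).
  assert (Hq : forall i, i < K -> block b (w (j+i)) = q).
  { intros i Hi. pose proof (block_mono b (w j) (w (j+i)) (w_mono n w Hw j (j+i) ltac:(lia) ltac:(lia))).
    pose proof (block_mono b (w (j+i)) (w (j+K-1)) (w_mono n w Hw (j+i) (j+K-1) ltac:(lia) ltac:(lia))).
    unfold q in *; lia. }
  assert (Hw2 := Hw). destruct Hw2 as [W1 [W2 W3]].
  assert (Hlq : label r sel q < r) by (apply label_lt; lia).
  destruct (Hg _ Hlq) as [_ Hn]. apply Hn.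
  exists (fun i => w (j+i) - q * b). split; [|split].
  - split; [|split].
    + intros i Hi. pose proof (block_bounds b (w (j+i)) Hb (W1 (j+i) ltac:(lia))). rewrite Hq in H by lia; lia.
    + intros i Hi. pose proof (block_bounds b (w (j+i)) Hb (W1 (j+i) ltac:(lia))). rewrite Hq in H by lia.
      specialize (W2 (j+i) ltac:(lia)). replace (j + (i+1)) with (j+i+1) by lia. lia.
    + intros i Hi. pose proof (block_bounds b (w (j+i)) Hb (W1 (j+i) ltac:(lia))). rewrite Hq in H by lia.
      specialize (W2 (j+i) ltac:(lia)). specialize (W3 (j+i) ltac:(lia)).
      replace (j + (i+1)) with (j+i+1) by lia. replace (j + (i+2)) with (j+i+2) by lia.
      replace (j + i + 1 + 1) with (j+i+2) in * by lia. lia.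
  - intros i Hi. pose proof (block_bounds b (w (j+i)) Hb (W1 (j+i) ltac:(lia))). rewrite Hq in H by lia. lia.
  - exists (colour r b gam sel (w 0)). intros i Hi.
    rewrite <- (Hc (j+i)) by lia. unfold colour. rewrite Hq by lia. reflexivity.
Qed.

Open Scope nat_scope.

Lemma phase1 r b K gam sel n w : 2 <= r -> 1 <= b -> 1 <= K -> gam_ok r b K gam ->
  (forall g, fst (sel g) < r) -> is_wave n w ->
  (forall i, i < n -> colour r b gam sel (w i) = colour r b gam sel (w 0)) ->
  (4*r-2)*(K-1) < n ->
  exists J, J < (4*r-2)*(K-1) /\ b < w (J+1) - w J.
Proof.
  intros Hr Hb HK Hg Hs Hw Hc Hn.
  assert (Hw2 := Hw). destruct Hw2 as [W1 [W2 W3]].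
  set (c := colour r b gam sel (w 0)).
  assert (Hcr : c < r). { apply (colour_lt r b K gam sel (w 0)). lia. lia. apply W1. nia. exact Hg. }
  set (B0 := block b (w 0)).
  destruct (label_hit r sel B0 c Hr Hs Hcr) as [qs [Hqs Lqs]].
  assert (nc : forall j, j < n -> label r sel (block b (w j)) <> c).
  { intros j Hj. apply (not_c_block r b K gam sel (w j) c); try lia; auto. }
  assert (cnt : forall p, p*(K-1) < n -> B0 + p <= block b (w (p*(K-1)))).
  { induction p; intros Hp.
    - simpl. unfold B0. lia.
    - replace (S p * (K-1)) with (p*(K-1) + K - 1) in * by nia.
      pose proof (same_block r b K gam sel n w (p*(K-1)) ltac:(lia) Hb HK Hg Hw Hc Hp).
      assert (p * (K-1) < n) by lia. specialize (IHp H0). lia. }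
  apply NNPP. intro Hno.
  assert (st : forall j, j <= (4*r-2)*(K-1) -> block b (w j) < qs).
  { induction j; intros Hj.
    - assert (block b (w 0) <> qs) by (intro E; apply (nc 0); [lia| rewrite E; auto]).
      unfold B0 in *; lia.
    - specialize (IHj ltac:(lia)).
      assert (Hgap : w (j+1) - w j <= b).
      { destruct (Nat.le_gt_cases (w (j+1) - w j) b) as [h|h]; auto.
        exfalso. apply Hno. exists j. split; [lia|exact h]. }
      specialize (W2 j ltac:(lia)).
      destruct (block_near b (w j) (w (j+1)) Hb (W1 j ltac:(lia)) ltac:(lia)) as [E|E];
      replace (S j) with (j+1) by lia.
      + lia.
      + assert (block b (w (j+1)) <> qs) by (intro E'; apply (nc (j+1)); [lia| rewrite E'; auto]).
        lia. }
  specialize (st ((4*r-2)*(K-1)) ltac:(lia)).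
  specialize (cnt (4*r-2) ltac:(lia)). lia.
Qed.

Open Scope nat_scope.

Lemma phase2 r b K M t gam sel n w J : 2 <= r -> 1 <= b -> gam_ok r b K gam ->
  (forall a d, (1 <= a)%nat -> (b < d)%nat -> (a + (t - 1) * d <= M)%nat ->
       good_AP r b M sel t a d) ->
  is_wave n w -> (forall i, i < n -> w i <= M) ->
  (forall i, i < n -> colour r b gam sel (w i) = colour r b gam sel (w 0)) ->
  J + 1 < n -> b < w (J+1) - w J ->
  exists P, 1 <= t - 1 /\ n - 2 - J < (P+1)*(t-1) /\
     P*(b+1) <= (t-1)*(w (n-1) - w (n-2)).
Proof.
  intros Hr Hb Hg HAP Hw HM Hc HJ HgJ.
  assert (Hw2 := Hw). destruct Hw2 as [W1 [W2 W3]].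
  set (c := colour r b gam sel (w 0)).
  assert (Hcr : c < r). { apply (colour_lt r b K gam sel (w 0)). lia. lia. apply W1. lia. exact Hg. }
  assert (nc : forall j, j < n -> label r sel (block b (w j)) <> c).
  { intros j Hj. apply (not_c_block r b K gam sel (w j) c); try lia; auto. }
  set (g := fun l => w (l+1) - w l).
  assert (gm : forall l l', l <= l' -> l' + 1 < n -> g l <= g l').
  { intros. apply (g_mono n w Hw); auto. }
  assert (wstep : forall l, l + 1 < n -> w (l+1) = w l + g l).
  { intros l Hl. specialize (W2 l Hl). unfold g. lia. }
  destruct (Nat.eq_0_gt_0_cases t) as [Ht0|Ht0].
  { exfalso. assert (H3 : w 0 + (t-1)*(b+1) <= M) by (rewrite Ht0; simpl; rewrite Nat.add_0_r; apply HM; lia).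
    destruct (HAP (w 0) (b+1) ltac:(apply W1; lia) ltac:(lia) H3 c Hcr) as [s [Hs _]]. lia. }
  set (u := t - 1).
  assert (contra : forall i, J <= i -> i + u + 1 < n -> u * (g (i+u) - g i) <= b -> False).
  { intros i Hi Hiu Hd.
    assert (dev : forall s, s <= u -> w i + s * g i <= w (i+s) /\
                   w (i+s) <= w i + s * g i + s * (g (i+u) - g i)).
    { induction s; intros Hs.
      - replace (i+0) with i by lia. simpl. lia.
      - specialize (IHs ltac:(lia)).
        rewrite (Nat.add_succ_r i s). replace (S (i+s)) with (i+s+1) by lia.
        rewrite (wstep (i+s)) by lia.
        pose proof (gm i (i+s) ltac:(lia) ltac:(lia)).
        pose proof (gm (i+s) (i+u) ltac:(lia) ltac:(lia)).
        nia. }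
    assert (gJi : g J <= g i) by (apply gm; lia).
    assert (Hgi : b < g i) by (unfold g in *; lia).
    destruct (dev u ltac:(lia)) as [Du _].
    assert (H3 : w i + (t-1) * g i <= M) by (fold u; pose proof (HM (i+u) ltac:(lia)); lia).
    destruct (HAP (w i) (g i) ltac:(apply W1; lia) Hgi H3 c Hcr) as [s [Hs [L1 [L2 _]]]].
    destruct (dev s ltac:(lia)) as [D1 D2].
    assert (s * (g (i+u) - g i) <= u * (g (i+u) - g i)) by (apply Nat.mul_le_mono_r; lia).
    destruct (block_near b (w i + s * g i) (w (i+s)) Hb ltac:(pose proof (W1 i ltac:(lia)); lia) ltac:(lia)) as [E|E].
    - apply (nc (i+s)); [lia|]. rewrite E. exact L1.
    - apply (nc (i+s)); [lia|]. rewrite E. replace (S (block b (w i + s * g i))) with (block b (w i + s * g i) + 1) by lia. exact L2. }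
  destruct (Nat.eq_0_gt_0_cases u) as [Hu0|Hu0].
  { exfalso. apply (contra J); rewrite ?Hu0; simpl; lia. }
  assert (grow : forall i, J <= i -> i + u + 1 < n -> u * g i + b + 1 <= u * g (i+u)).
  { intros i Hi Hiu.
    destruct (Nat.le_gt_cases (u * (g (i+u) - g i)) b) as [h|h].
    - exfalso. exact (contra i Hi Hiu h).
    - pose proof (gm i (i+u) ltac:(lia) ltac:(lia)). rewrite Nat.mul_sub_distr_l in h.
      assert (u * g i <= u * g (i+u)) by (apply Nat.mul_le_mono_l; lia). lia. }
  assert (ind : forall p, J + p*u + 1 < n -> u * g J + p*(b+1) <= u * g (J + p*u)).
  { induction p; intros Hp.
    - simpl. replace (J+0) with J by lia. lia.
    - replace (J + S p * u) with (J + p*u + u) in * by nia.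
      assert (J + p * u + 1 < n) by lia. specialize (IHp H).
      pose proof (grow (J + p*u) ltac:(lia) ltac:(lia)). nia. }
  set (P := (n - 2 - J) / u).
  exists P. fold u.
  pose proof (Nat.div_mod (n-2-J) u ltac:(lia)).
  pose proof (Nat.mod_upper_bound (n-2-J) u ltac:(lia)).
  fold P in H, H0.
  assert (HP : J + P * u + 1 < n) by nia.
  specialize (ind P HP).
  pose proof (gm (J + P*u) (n-2) ltac:(lia) ltac:(lia)).
  assert (u * g (J + P*u) <= u * g (n-2)) by (apply Nat.mul_le_mono_l; lia).
  replace (n - 2 + 1) with (n-1) in * by lia. unfold g in H2. replace (n-2+1) with (n-1) in H2 by lia.
  split; [lia|]. split. { rewrite Nat.mul_add_distr_r, Nat.mul_1_l. rewrite (Nat.mul_comm u P) in H. lia. } unfold g in ind. eapply Nat.le_trans; [|exact H2]. eapply Nat.le_trans; [|exact ind]. apply Nat.le_add_l.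
Qed.

Open Scope R_scope.

Lemma nfloor_le x : INR (nfloor x) <= Rmax 0 x.
Proof.
  unfold nfloor. destruct (Z.lt_ge_cases (Int_part x) 0) as [z|z].
  - replace (Z.to_nat (Int_part x)) with 0%nat by lia. simpl. apply Rmax_l.
  - rewrite INR_IZR_INZ, Znat.Z2Nat.id by lia. destruct (base_Int_part x).
    eapply Rle_trans; [eassumption|apply Rmax_r].
Qed.

Definition tA r := let L := log2 (INR r ^ 2 / (INR r ^ 2 - 1)) in
  (4 * INR r - 2) * (2 * INR r + 1) / L.
Definition tB r := let L := log2 (INR r ^ 2 / (INR r ^ 2 - 1)) in
  (2 * INR r + 1) * (log2 (INR r) + 1) / L.

Lemma t_le r k : INR (t_len r k) <= Rmax 0 (tA r * log2 (INR k) + tB r).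
Proof. unfold t_len, tA, tB. cbv zeta. apply nfloor_le. Qed.

Lemma asym r eps : 0 < eps -> exists k0 : nat, forall k : nat, (k0 <= k)%nat ->
  forall u : nat, (1 <= u)%nat -> (u <= t_len r k)%nat ->
  INR u * INR u * Rpower (INR k) (1 - eps/2) + INR u <= 3/10 * INR k.
Proof.
  intros He.
  set (d := Rmin eps 1 / 8).
  assert (Hd : 0 < d) by (unfold d; apply Rmin_case; lra).
  assert (Hd2 : d <= eps / 8) by (unfold d; pose proof (Rmin_l eps 1); lra).
  assert (Hd3 : d <= 1 / 8) by (unfold d; pose proof (Rmin_r eps 1); lra).
  assert (ln2 : 0 < ln 2) by (rewrite <- ln_1; apply ln_increasing; lra).
  set (C := Rabs (tA r) / (d * ln 2) + Rabs (tB r)).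
  assert (HC : 0 <= C).
  { unfold C. apply Rplus_le_le_0_compat; [|apply Rabs_pos].
    apply Rmult_le_pos; [apply Rabs_pos|]. apply Rlt_le, Rinv_0_lt_compat. nra. }
  set (A := (3 * C + 3) / d).
  destruct (INR_unbounded (exp A)) as [N HN].
  exists (Nat.max 1 N). intros k Hk u Hu1 Hut.
  assert (Hk1 : 1 <= INR k) by (apply (le_INR 1); lia).
  assert (HkN : exp A < INR k) by (apply Rlt_le_trans with (INR N); [lra|apply le_INR; lia]).
  assert (Hk0 : 0 < INR k) by lra.
  assert (lnk : A <= ln (INR k)).
  { rewrite <- (ln_exp A). apply Rlt_le, ln_increasing; [apply exp_pos|lra]. }
  assert (lnk0 : 0 <= ln (INR k)) by (destruct (Rle_lt_or_eq_dec 1 (INR k) Hk1) as [h|h]; [rewrite <- ln_1; apply Rlt_le, ln_increasing; lra| rewrite <- h, ln_1; lra]).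
  set (Y := Rpower (INR k) d).
  assert (HY : 1 + d * ln (INR k) <= Y) by (unfold Y, Rpower; apply exp_ineq1_le).
  assert (HYA : 3 * C + 3 <= Y).
  { assert (d * A = 3 * C + 3) by (unfold A; field; lra).
    assert (d * A <= d * ln (INR k)) by (apply Rmult_le_compat_l; lra). lra. }
  assert (Hu : INR u <= C * Y).
  { apply Rle_trans with (INR (t_len r k)); [apply le_INR; lia|].
    eapply Rle_trans; [apply t_le|].
    assert (L2 : 0 <= log2 (INR k)) by (unfold log2; apply Rmult_le_pos; [lra|apply Rlt_le, Rinv_0_lt_compat; lra]).
    assert (L3 : log2 (INR k) <= Y / (d * ln 2)).
    { unfold log2. unfold Rdiv. rewrite Rinv_mult.
      assert (ln (INR k) <= Y * / d).
      { apply Rmult_le_reg_l with d; [lra|]. field_simplify; lra. }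
      assert (0 < / ln 2) by (apply Rinv_0_lt_compat; lra).
      assert (0 < / d) by (apply Rinv_0_lt_compat; lra).
      nra. }
    apply Rmax_lub.
    - apply Rmult_le_pos; lra.
    - assert (tA r * log2 (INR k) <= Rabs (tA r) * (Y / (d * ln 2))).
      { eapply Rle_trans; [apply Rle_abs|]. rewrite Rabs_mult, (Rabs_pos_eq (log2 _)) by lra.
        apply Rmult_le_compat_l; [apply Rabs_pos|lra]. }
      assert (tB r <= Rabs (tB r) * Y).
      { eapply Rle_trans; [apply Rle_abs|]. pose proof (Rabs_pos (tB r)). nra. }
      unfold C. unfold Rdiv in *. nra. }
  set (Z := Rpower (INR k) (1 - 4 * d)).
  assert (HZ1 : 1 <= Z).
  { unfold Z. rewrite <- (Rpower_O (INR k)) at 1 by lra. apply Rle_Rpower; lra. }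
  assert (HX : Rpower (INR k) (1 - eps/2) <= Z) by (unfold Z; apply Rle_Rpower; lra).
  assert (HZY : Z * (Y * Y * Y * Y) = INR k).
  { unfold Z, Y. rewrite <- !Rpower_plus.
    replace (1 - 4 * d + (d + d + d + d)) with 1 by ring. apply Rpower_1; lra. }
  assert (Hu1r : 1 <= INR u) by (apply (le_INR 1); lia).
  assert (HXp : 0 <= Rpower (INR k) (1 - eps/2)) by (unfold Rpower; apply Rlt_le, exp_pos).
  assert (S1 : INR u * INR u * Rpower (INR k) (1 - eps/2) + INR u <= 2 * (INR u * INR u) * Z) by nra.
  assert (S2 : INR u * INR u <= C * C * (Y * Y)) by nra.
  assert (S3 : 9 * (C * C) + 1 <= Y * Y) by nra.
  assert (0 < Z) by lra.
  assert (S4 : 2 * (INR u * INR u) * Z <= 2 * (C * C * (Y * Y)) * Z) by (apply Rmult_le_compat_r; lra).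
  assert (S5 : 2 * (C * C) <= 3/10 * (Y * Y)) by (assert (0 <= C * C) by nra; lra).
  assert (S6 : 2 * (C * C) * ((Y * Y) * Z) <= 3/10 * (Y * Y) * ((Y * Y) * Z)).
  { apply Rmult_le_compat_r; [|lra]. apply Rmult_le_pos; [nra|lra]. }
  replace (2 * (C * C * (Y * Y)) * Z) with (2 * (C * C) * ((Y * Y) * Z)) in S4 by ring.
  replace (3/10 * (Y * Y) * ((Y * Y) * Z)) with (3/10 * (Z * (Y * Y * Y * Y))) in S6 by ring.
  rewrite HZY in S6. lra.
Qed.

Open Scope R_scope.

Theorem lemma2p3 (r : nat) (eps : R) :
  (2 <= r)%nat -> 0 < eps ->
  exists k0 : nat, forall k : nat, (k0 <= k)%nat ->
  let K := K_of r k in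
  let M := M_eps r eps k in
  let t := t_len r k in
  let n := (k / 2)%nat in
  forall (b : nat), (exists N, is_AW K (r - 1) N /\ b = (N - 1)%nat) ->
  forall (gam : nat -> nat -> nat),
    (forall i, (i < r)%nat ->
       (forall x, (1 <= x <= b)%nat -> (gam i x < r)%nat /\ gam i x <> i) /\
       ~ has_mono_wave (gam i) b K) ->
  forall (sel : nat -> nat * nat),
    (forall g, (fst (sel g) < r)%nat /\ (1 <= snd (sel g) <= r)%nat) ->
    (forall a d, (1 <= a)%nat -> (b < d)%nat -> (a + (t - 1) * d <= M)%nat ->
       good_AP r b M sel t a d) ->
  forall w : nat -> nat, is_wave n w ->
    (forall i, (i < n)%nat -> (w i <= M)%nat) ->
    (forall i, (i < n)%nat -> colour r b gam sel (w i) = colour r b gam sel (w 0%nat)) ->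
    INR b * Rpower (INR k) (1 - eps / 2) <= INR (w (n - 1)%nat - w (n - 2)%nat).
Proof.
  intros Hr He. destruct (asym r eps He) as [k1 Hk1].
  exists (Nat.max k1 (100*r)).
  intros k Hk K M t n b Hb gam Hgam sel Hsel HAP w Hw HwM Hcol.
  assert (HKd : (K * (10 * (4*r-4)) <= k /\ k < (K+1) * (10*(4*r-4)))%nat).
  { unfold K, K_of. pose proof (Nat.div_mod k (10*(4*r-4)) ltac:(lia)).
    pose proof (Nat.mod_upper_bound k (10*(4*r-4)) ltac:(lia)).
    set (q := (k / (10 * (4 * r - 4)))%nat) in *. set (m := (k mod (10 * (4 * r - 4)))%nat) in *.
    clearbody q m. nia. }
  assert (Hk100 : (100*r <= k)%nat) by lia.
  assert (HK2 : (2 <= K)%nat).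
  { destruct (Nat.le_gt_cases 2 K) as [h|h]; auto. exfalso.
    destruct HKd as [_ HKd]. assert ((K+1) * (10 * (4*r-4)) <= 2 * (10 * (4*r-4)))%nat by (apply Nat.mul_le_mono_r; lia).
    lia. }
  assert (HK3 : (20 * (4*r-2) * K <= 3 * k)%nat).
  { assert (20 * (4*r-2) * K <= 3 * (10*(4*r-4)) * K)%nat by (apply Nat.mul_le_mono_r; lia).
    assert (E : (3 * (10*(4*r-4)) * K = 3 * (K * (10*(4*r-4))))%nat) by ring. lia. }
  assert (Hn : (2 * n <= k <= 2 * n + 1)%nat).
  { unfold n. pose proof (Nat.div_mod k 2 ltac:(lia)). pose proof (Nat.mod_upper_bound k 2 ltac:(lia)). lia. }
  assert (Hb1 : (1 <= b)%nat).
  { destruct Hb as [N [[HN _] ->]].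
    destruct (Nat.le_gt_cases N 1) as [h|h]; [|lia]. exfalso.
    destruct (HN (fun _ => 0%nat) ltac:(intros; simpl; lia)) as [v [[V1 [V2 _]] [V4 _]]].
    specialize (V1 0%nat ltac:(lia)). specialize (V2 0%nat ltac:(lia)). specialize (V4 1%nat ltac:(lia)).
    simpl in *. lia. }
  assert (Hg : gam_ok r b K gam) by exact Hgam.
  assert (Hs : forall g, (fst (sel g) < r)%nat) by (intro g; apply Hsel).
  assert (HnK : ((4*r-2)*(K-1) < n)%nat) by nia.
  destruct (phase1 r b K gam sel n w Hr Hb1 ltac:(lia) Hg Hs Hw Hcol HnK) as [J [HJ1 HJ2]].
  assert (HJn : (J + 1 < n)%nat) by lia.
  destruct (phase2 r b K M t gam sel n w J Hr Hb1 Hg HAP Hw HwM Hcol HJn HJ2) as [P [Hu [HP1 HP2]]].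
  set (u := (t - 1)%nat) in *. set (G := (w (n - 1)%nat - w (n - 2)%nat)%nat) in *.
  assert (Hut : (u <= t_len r k)%nat) by (unfold u, t; lia).
  clearbody u G.
  assert (Nat1 : (6 * k * b <= 20 * (u * u * G + u * b))%nat).
  { assert (a1 : (u * P * b <= u * u * G)%nat).
    { apply Nat.le_trans with (u * (P * (b+1)))%nat; [nia|].
      replace (u * u * G)%nat with (u * (u * G))%nat by ring. apply Nat.mul_le_mono_l; exact HP2. }
    assert (a2 : ((n - 1 - J) * b <= (P+1) * u * b)%nat) by (apply Nat.mul_le_mono_r; lia).
    assert (a3 : (6 * k <= 20 * (n - 1 - J))%nat) by nia.
    assert (a4 : (6 * k * b <= 20 * (n - 1 - J) * b)%nat) by (apply Nat.mul_le_mono_r; exact a3).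
    assert (E1 : ((P+1) * u * b = u * P * b + u * b)%nat) by ring.
    assert (E2 : (20 * (n - 1 - J) * b = 20 * ((n - 1 - J) * b))%nat) by ring.
    lia. }
  apply le_INR in Nat1. rewrite !mult_INR, !plus_INR, !mult_INR in Nat1. simpl (INR 6) in Nat1.
  specialize (Hk1 k ltac:(lia) u ltac:(lia) Hut).
  set (X := Rpower (INR k) (1 - eps / 2)) in *.
  assert (Hb0 : 0 <= INR b) by apply pos_INR.
  assert (Hu0 : 1 <= INR u) by (apply (le_INR 1); lia).
  assert (HX0 : 0 <= X) by (unfold X, Rpower; apply Rlt_le, exp_pos).
  assert (HG0 : 0 <= INR G) by apply pos_INR.
  assert (T1 : INR b * (INR u * INR u * X + INR u) <= INR b * (3 / 10 * INR k)) by (apply Rmult_le_compat_l; lra).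
  assert (N20 : INR 20 = 20) by (simpl; ring). rewrite N20 in Nat1.
  assert (T2 : (INR u * INR u) * (INR b * X) <= (INR u * INR u) * INR G) by nra.
  apply Rmult_le_reg_l with (INR u * INR u); [nra|exact T2].
Qed.
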